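(* Let $\bm A=(A_1,\dots,A_d)$ be Hermitian matrices in $M_n(\mathbb{C})$, $B\in M_n(\mathbb{C})$, and $(\bm\lambda,\nu)\in\mathbb{R}^d\times\mathbb{C}$. Suppose there is a unit vector $\bm\psi\in\mathbb{C}^n$ with $$\sum_{i=1}^d\|A_i\bm\psi-\lambda_i\bm\psi\|^2+\|B\bm\psi-\nu\bm\psi\|^2\le\epsilon_1$$ and that $\sum_{i\neq k}\|[A_i,A_k]\|+\|F_{(\bm\lambda,\nu)}(\bm A,B)\|\le\epsilon_2$, for some $\epsilon_1,\epsilon_2\ge0$. Then $(\bm\lambda,\nu)\in\dot\Lambda^{C}_{\epsilon}(\bm A,B)$ with $\epsilon=\sqrt{\epsilon_1+\epsilon_2}$.
   Context: Let $n,d,m$ be positive integers. Fix Hermitian matrices $\Gamma_1,\dots,\Gamma_d\in M_{2m}(\mathbb{C})$ with $\Gamma_i^2=I_{2m}$ and $\Gamma_i\Gamma_j=-\Gamma_j\Gamma_i$ for $i\neq j$ (a Clifford representation; the paper uses a specific one built from Pauli matrices). Write $P=\begin{bmatrix} I_m&0\\0&0_m\end{bmatrix}$ and $Q=\begin{bmatrix}0_m&0\\0&I_m\end{bmatrix}$ in $M_{2m}(\mathbb{C})$. For a $d$-tuple $\bm A=(A_1,\dots,A_d)$ of Hermitian matrices in $M_n(\mathbb{C})$, a matrix $B\in M_n(\mathbb{C})$ (not necessarily Hermitian or normal), and a probe site $(\bm\lambda,\nu)\in\mathbb{R}^d\times\mathbb{C}$, the non-Hermitian spectral localizer is $$L_{(\bm\lambda,\nu)}(\bm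 A,B)=\sum_{i=1}^d (A_i-\lambda_i I)\otimes\Gamma_i+(B-\nu I)\otimes P-(B-\nu I)^\dagger\otimes Q\in M_{2mn}(\mathbb{C}).$$ The Clifford radial gap is $\dot\mu^{C}_{(\bm\lambda,\nu)}(\bm A,B)=\sigma_{\min}\big(L_{(\bm\lambda,\nu)}(\bm A,B)\big)$, and the Clifford radial $\epsilon$-pseudospectrum is $\dot\Lambda^{C}_\epsilon(\bm A,B)=\{(\bm\lambda,\nu)\in\mathbb{R}^d\times\mathbb{C}:\dot\mu^{C}_{(\bm\lambda,\nu)}(\bm A,B)\le\epsilon\}$. Define $$F_{(\bm\lambda,\nu)}(\bm A,B)=\sum_{i=1}^d\big(G_i+G_i^\dagger\big)-\sum_{i=1}^d\big(H_i+H_i^\dagger\big),\quad G_i=(A_i-\lambda_i I)(B-\nu I)\otimes\Gamma_iP,\quad H_i=(A_i-\lambda_i I)(B-\nu I)^\dagger\otimes\Gamma_iQ.$$ All matrix norms are operator norms; vector norms are Euclidean. *)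

(* Defs.v *)
From HB Require Import structures.
From mathcomp Require Import all_boot all_order all_algebra.
From mathcomp Require Import complex mxtens.
From mathcomp Require Import classical_sets reals.
Set Implicit Arguments. Unset Strict Implicit. Unset Printing Implicit Defensive.
Import Order.TTheory GRing.Theory Num.Theory.
Local Open Scope ring_scope.
Local Open Scope classical_set_scope.

Section Defs.
Variable R : realType.
Local Notation C := R[i].

Definition vnorm (n : nat) (v : 'cV[C]_n) : R :=
  Num.sqrt (\sum_(i < n) ComplexField.Normc.normc (v i 0) ^+ 2).

Definition opnorm (p q : nat) (M : 'M[C]_(p, q)) : R :=
  sup [set vnorm (M *m v) | v in [set v : 'cV[C]_q | vnorm v = 1]].

Definition sigma_min (p : nat) (M : 'M[C]_p) : R :=
  inf [set vnorm (M *m v) | v in [set v : 'cV[C]_p | vnorm v = 1]].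

Definition adjmx (p q : nat) (M : 'M[C]_(p, q)) : 'M[C]_(q, p) :=
  map_mx (@conjc R) M^T.

Definition is_hermitian (p : nat) (M : 'M[C]_p) : Prop := adjmx M = M.

Definition clifford_rep (d m : nat) (Gam : 'I_d -> 'M[C]_(m + m)) : Prop :=
  (forall i, is_hermitian (Gam i)) /\
  (forall i, Gam i *m Gam i = 1%:M) /\
  (forall i j, i != j -> Gam i *m Gam j = - (Gam j *m Gam i)).

Definition Pmx (m : nat) : 'M[C]_(m + m) := block_mx 1%:M 0 0 0.
Definition Qmx (m : nat) : 'M[C]_(m + m) := block_mx 0 0 0 1%:M.

Definition rscal (n : nat) (r : R) : 'M[C]_n := ((r%:C)%C)%:M.

Definition localizer (d m n : nat) (Gam : 'I_d -> 'M[C]_(m + m))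
    (A : 'I_d -> 'M[C]_n) (B : 'M[C]_n) (lam : 'I_d -> R) (nu : C)
    : 'M[C]_(n * (m + m)) :=
  \sum_(i < d) ((A i - rscal n (lam i)) *t Gam i)
  + ((B - nu%:M) *t Pmx m) - (adjmx (B - nu%:M) *t Qmx m).

Definition clifford_radial_gap d m n Gam (A : 'I_d -> 'M[C]_n) B lam nu : R :=
  sigma_min (@localizer d m n Gam A B lam nu).

Definition clifford_pseudospectrum d m n Gam (A : 'I_d -> 'M[C]_n) B (eps : R)
    : set (('I_d -> R) * C) :=
  [set p | @clifford_radial_gap d m n Gam A B p.1 p.2 <= eps].

Definition Fmx (d m n : nat) (Gam : 'I_d -> 'M[C]_(m + m))
    (A : 'I_d -> 'M[C]_n) (B : 'M[C]_n) (lam : 'I_d -> R) (nu : C)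
    : 'M[C]_(n * (m + m)) :=
  let G i := ((A i - rscal n (lam i)) *m (B - nu%:M)) *t (Gam i *m Pmx m) in
  let H i := ((A i - rscal n (lam i)) *m adjmx (B - nu%:M)) *t (Gam i *m Qmx m) in
  \sum_(i < d) (G i + adjmx (G i)) - \sum_(i < d) (H i + adjmx (H i)).

End Defs.

(* Main.v *)
Require Import Defs.
From HB Require Import structures.
From mathcomp Require Import all_boot all_order all_algebra.
From mathcomp Require Import complex mxtens.
From mathcomp Require Import classical_sets reals.
From mathcomp Require Import lra.
Set Implicit Arguments. Unset Strict Implicit. Unset Printing Implicit Defensive.
Import Order.TTheory GRing.Theory Num.Theory.
Local Open Scope ring_scope.
Local Open Scope classical_set_scope.

Section Aux.
Variable R : realType.
Local Notation C := R[i].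
Local Notation normc := (@ComplexField.Normc.normc R).

Definition dot (p : nat) (u w : 'cV[C]_p) : C := \sum_j (conjc (u j 0)) * w j 0.

Lemma normc_ge0 (z : C) : 0 <= normc z.
Proof. by case: z => a b /=; rewrite sqrtr_ge0. Qed.

Lemma normc_sq (z : C) : normc z ^+ 2 = complex.Re z ^+ 2 + complex.Im z ^+ 2.
Proof. by case: z => a b /=; rewrite sqr_sqrtr // addr_ge0 ?sqr_ge0. Qed.

Lemma conjcM_self (z : C) : conjc z * z = ((normc z ^+ 2)%:C)%C.
Proof.
rewrite normc_sq; case: z => a b /=; simpc.
apply/eqP; rewrite eq_complex /=; apply/andP; split; apply/eqP; rewrite ?expr2; lra.
Qed.

Lemma normc_conj (z : C) : normc (conjc z) = normc z.
Proof. by case: z => a b /=; rewrite sqrrN. Qed.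

Lemma Re_le_normc (z : C) : complex.Re z <= normc z.
Proof.
case: z => a b /=; apply: le_trans (ler_norm a) _.
rewrite -sqrtr_sqr ler_sqrt ?addr_ge0 ?sqr_ge0 //.
by rewrite lerDl sqr_ge0.
Qed.

Lemma normc_sum (I : Type) (r : seq I) (P : pred I) (F : I -> C) :
  normc (\sum_(i <- r | P i) F i) <= \sum_(i <- r | P i) normc (F i).
Proof.
elim/big_rec2: _ => [|i y1 y2 _ IH]; first by rewrite ComplexField.Normc.normc0.
apply: le_trans (le_normcD _ _) _; by rewrite lerD2l.
Qed.

Lemma vnorm_ge0 p (v : 'cV[C]_p) : 0 <= vnorm v.
Proof. by rewrite /vnorm sqrtr_ge0. Qed.

Lemma vnorm_sq p (v : 'cV[C]_p) : vnorm v ^+ 2 = \sum_j normc (v j 0) ^+ 2.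
Proof. by rewrite /vnorm sqr_sqrtr // sumr_ge0 // => i _; rewrite sqr_ge0. Qed.

Lemma dot_self p (v : 'cV[C]_p) : dot v v = ((vnorm v ^+ 2)%:C)%C.
Proof.
by rewrite vnorm_sq /dot rmorph_sum; apply: eq_bigr => i _; rewrite conjcM_self.
Qed.


Lemma real_cs_unit p (x y : 'I_p -> R) :
  (forall j, 0 <= x j) -> (forall j, 0 <= y j) ->
  \sum_j x j ^+ 2 = 1 -> \sum_j x j * y j <= Num.sqrt (\sum_j y j ^+ 2).
Proof.
move=> x0 y0 sx.
have Sy0 : 0 <= \sum_j y j ^+ 2 by apply: sumr_ge0 => j _; rewrite sqr_ge0.
set b := Num.sqrt _.
have b0 : 0 <= b by rewrite sqrtr_ge0.
have Sxy0 : 0 <= \sum_j x j * y j by apply: sumr_ge0 => j _; rewrite mulr_ge0.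
have bb : b ^+ 2 = \sum_j y j ^+ 2 by rewrite sqr_sqrtr.
have [bz|bpos] := eqVneq b 0.
  have: \sum_j y j ^+ 2 = 0 by rewrite -bb bz expr0n.
  move/psumr_eq0P => H.
  have yz : forall j, y j = 0.
    by move=> j; apply/eqP; rewrite -sqrf_eq0; apply/eqP; apply: H => // j' _; rewrite sqr_ge0.
  by rewrite big1 ?bz // => j _; rewrite yz mulr0.
have bp : 0 < b by rewrite lt_def bpos b0.
have key : \sum_j (2 * b * (x j * y j)) <= \sum_j (b ^+ 2 * x j ^+ 2 + y j ^+ 2).
  by apply: ler_sum => j _; have := sqr_ge0 (b * x j - y j); nra.
move: key; rewrite -mulr_sumr big_split /= -mulr_sumr sx -bb => key.
nra.
Qed.

Lemma cs_unit p (u w : 'cV[C]_p) : vnorm u = 1 -> normc (dot u w) <= vnorm w.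
Proof.
move=> u1.
apply: le_trans (normc_sum _ _ _) _.
under eq_bigr do rewrite ComplexField.Normc.normcM normc_conj.
apply: real_cs_unit; try by move=> j; apply: normc_ge0.
by rewrite -vnorm_sq u1 expr1n.
Qed.

Lemma dotDr p (u w w' : 'cV[C]_p) : dot u (w + w') = dot u w + dot u w'.
Proof. by rewrite /dot -big_split; apply: eq_bigr => j _; rewrite mxE mulrDr. Qed.

Lemma dotNr p (u w : 'cV[C]_p) : dot u (- w) = - dot u w.
Proof. by rewrite /dot -sumrN; apply: eq_bigr => j _; rewrite mxE mulrN. Qed.

Lemma dotBr p (u w w' : 'cV[C]_p) : dot u (w - w') = dot u w - dot u w'.
Proof. by rewrite dotDr dotNr. Qed.

Lemma dot0r p (u : 'cV[C]_p) : dot u 0 = 0.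
Proof. by rewrite /dot big1 // => j _; rewrite mxE mulr0. Qed.

Lemma dotsumr p (I : finType) (u : 'cV[C]_p) (w : I -> 'cV[C]_p) :
  dot u (\sum_i w i) = \sum_i dot u (w i).
Proof.
rewrite /dot exchange_big /=; apply: eq_bigr => j _.
by rewrite summxE mulr_sumr.
Qed.

Lemma dotJ p (u w : 'cV[C]_p) : conjc (dot u w) = dot w u.
Proof.
rewrite /dot rmorph_sum; apply: eq_bigr => j _.
by rewrite rmorphM /= conjcK mulrC.
Qed.

Lemma dotDl p (u u' w : 'cV[C]_p) : dot (u + u') w = dot u w + dot u' w.
Proof. by rewrite -[LHS]dotJ dotDr rmorphD /= !dotJ. Qed.

Lemma dotsuml p (I : finType) (u : I -> 'cV[C]_p) (w : 'cV[C]_p) :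
  dot (\sum_i u i) w = \sum_i dot (u i) w.
Proof. by rewrite -[LHS]dotJ dotsumr rmorph_sum; apply: eq_bigr => i _; rewrite /= dotJ. Qed.

Lemma dot0l p (w : 'cV[C]_p) : dot 0 w = 0.
Proof. by rewrite -[LHS]dotJ dot0r conjc0. Qed.

Lemma dot_adj p q (u : 'cV[C]_p) (M : 'M[C]_(p, q)) (w : 'cV[C]_q) :
  dot u (M *m w) = dot (adjmx M *m u) w.
Proof.
rewrite /dot /adjmx.
under eq_bigr do rewrite mxE mulr_sumr.
rewrite exchange_big /=; apply: eq_bigr => k _.
rewrite !mxE rmorph_sum mulr_suml; apply: eq_bigr => j _.
by rewrite !mxE rmorphM /= conjcK mulrCA mulrA.
Qed.


Lemma dot_tens p q (u w : 'cV[C]_p) (e f : 'cV[C]_q) :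
  dot (u *t e) (w *t f) = dot u w * dot e f.
Proof.
rewrite /dot mulr_sum; apply: eq_bigr => k _.
rewrite !mxE.
have -> : mxtens_unindex (0 : 'I_(1 * 1)) = (0, 0).
  by case: (mxtens_unindex _) => a b; rewrite [a]ord1 [b]ord1.
by rewrite rmorphM /= mulrACA.
Qed.

Lemma normc_entry_le1 p (u : 'cV[C]_p) l : vnorm u = 1 -> normc (u l 0) <= 1.
Proof.
move=> u1; have := vnorm_sq u; rewrite u1 expr1n (bigD1 l) //= => h.
have : 0 <= \sum_(j | j != l) normc (u j 0) ^+ 2 by apply: sumr_ge0 => j _; rewrite sqr_ge0.
have := normc_ge0 (u l 0); nra.
Qed.

Lemma opnorm_ub p q (M : 'M[C]_(p, q)) (u : 'cV[C]_q) :
  vnorm u = 1 -> vnorm (M *m u) <= opnorm M.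
Proof.
move=> u1; rewrite /opnorm; apply: ub_le_sup; last by exists u.
exists (Num.sqrt (\sum_j (\sum_l normc (M j l)) ^+ 2)).
move=> x [v /= v1 <-]; rewrite /vnorm ler_sqrt; last first.
  by apply: sumr_ge0 => j _; rewrite sqr_ge0.
apply: ler_sum => j _.
have h1 : normc ((M *m v) j 0) <= \sum_l normc (M j l).
  rewrite mxE; apply: le_trans (normc_sum _ _ _) _; apply: ler_sum => l _.
  rewrite ComplexField.Normc.normcM.
  have := normc_entry_le1 l v1; have := normc_ge0 (M j l); have := normc_ge0 (v l 0); nra.
have := normc_ge0 ((M *m v) j 0); nra.
Qed.

Lemma sigma_min_lb p (M : 'M[C]_p) (u : 'cV[C]_p) :
  vnorm u = 1 -> sigma_min M <= vnorm (M *m u).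
Proof.
move=> u1; rewrite /sigma_min; apply: ge_inf; last by exists u.
by exists 0 => x [v _ <-]; apply: vnorm_ge0.
Qed.


Lemma herm_dot p (M : 'M[C]_p) (u w : 'cV[C]_p) :
  is_hermitian M -> dot (M *m u) w = dot u (M *m w).
Proof. by move=> H; rewrite dot_adj H. Qed.

Lemma adjmxK p q (M : 'M[C]_(p, q)) : adjmx (adjmx M) = M.
Proof. by apply/matrixP => i j; rewrite /adjmx !mxE conjcK. Qed.

Lemma adjmxB p q (M N : 'M[C]_(p, q)) : adjmx (M - N) = adjmx M - adjmx N.
Proof. by apply/matrixP => i j; rewrite /adjmx !mxE rmorphB. Qed.

Lemma adj_rscal p (r : R) : adjmx (rscal p r) = rscal p r.
Proof.
apply/matrixP => i j; rewrite /adjmx /rscal !mxE eq_sym.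
case: (i == j) => /=.
- by rewrite mulr1n oppr0.
- by rewrite mulr0n oppr0.
Qed.

Lemma herm_sub_rscal p (M : 'M[C]_p) (r : R) :
  is_hermitian M -> is_hermitian (M - rscal p r).
Proof. by move=> H; rewrite /is_hermitian adjmxB H adj_rscal. Qed.

Lemma vnorm_unit p (v : 'cV[C]_p) : dot v v = 1 -> vnorm v = 1.
Proof.
rewrite dot_self => /(f_equal (@complex.Re R)) /= h.
have := vnorm_ge0 v; move: h; set x := vnorm v => h h0.
have : x ^+ 2 = 1 by exact: h.
nra.
Qed.

Lemma Re_addC (x : R) (z : C) : complex.Re ((x%:C)%C + z) = x + complex.Re z.
Proof. by case: z. Qed.

End Aux.
Lemma zmod_id (V : zmodType) (a b c d f : V) :
  (a - c - (b - d)) - (f - b - (c - d)) = a - f.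
Proof. by rewrite !opprB addrACA !addrA !subrK. Qed.

Lemma comm_shift (R : comPzRingType) p (A1 A2 : 'M[R]_p) (r1 r2 : R) :
  (A1 - r1%:M) *m (A2 - r2%:M) - (A2 - r2%:M) *m (A1 - r1%:M)
  = A1 *m A2 - A2 *m A1.
Proof.
rewrite !mulmxBl !mulmxBr.
rewrite [A1 *m r2%:M]scalar_mxC [A2 *m r1%:M]scalar_mxC [r2%:M *m r1%:M]scalar_mxC.
exact: zmod_id.
Qed.

Lemma dot_mxB (R : realType) p q (u : 'cV[R[i]]_p) (M N : 'M[R[i]]_(p, q)) (w : 'cV[R[i]]_q) :
  dot u ((M - N) *m w) = dot u (M *m w) - dot u (N *m w).
Proof. by rewrite mulmxBl dotBr. Qed.

Lemma dot_mxD (R : realType) p q (u : 'cV[R[i]]_p) (M N : 'M[R[i]]_(p, q)) (w : 'cV[R[i]]_q) :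
  dot u ((M + N) *m w) = dot u (M *m w) + dot u (N *m w).
Proof. by rewrite mulmxDl dotDr. Qed.

Lemma dot_mxsum (R : realType) p q (I : finType) (u : 'cV[R[i]]_p) (M : I -> 'M[R[i]]_(p, q)) (w : 'cV[R[i]]_q) :
  dot u ((\sum_i M i) *m w) = \sum_i dot u (M i *m w).
Proof. by rewrite mulmx_suml dotsumr. Qed.

Local Notation normc := (@ComplexField.Normc.normc _).

Theorem mainTheorem4 (R : realType) (n d m : nat)
    (Gam : 'I_d -> 'M[R[i]]_(m + m))
    (A : 'I_d -> 'M[R[i]]_n) (B : 'M[R[i]]_n)
    (lam : 'I_d -> R) (nu : R[i]) (eps1 eps2 : R) :
  (0 < n)%N -> (0 < d)%N -> (0 < m)%N ->
  clifford_rep Gam ->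
  (forall i, is_hermitian (A i)) ->
  0 <= eps1 -> 0 <= eps2 ->
  (exists psi : 'cV[R[i]]_n,
      vnorm psi = 1 /\
      \sum_(j < d) vnorm (A j *m psi - rscal n (lam j) *m psi) ^+ 2
        + vnorm (B *m psi - nu *: psi) ^+ 2 <= eps1) ->
  \sum_(j < d) \sum_(k < d | j != k) opnorm (A j *m A k - A k *m A j)
    + opnorm (Fmx Gam A B lam nu) <= eps2 ->
  (lam, nu) \in clifford_pseudospectrum Gam A B (Num.sqrt (eps1 + eps2)).
Proof.
move=> n0 d0 m0 [GH [G2 GA]] AH e10 e20 [psi [psi1 Hpsi]] Heps2.
pose X i := A i - rscal n (lam i).
pose Y := B - nu%:M.
have XH : forall i, is_hermitian (X i) by move=> i; apply: herm_sub_rscal.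
have [e [Pe [Qe e1]]] : exists e : 'cV[R[i]]_(m + m),
    @Pmx R m *m e = e /\ @Qmx R m *m e = 0 /\ vnorm e = 1.
  pose i0 : 'I_m := Ordinal m0.
  exists (col_mx (delta_mx i0 0) 0).
  split; first by rewrite /Pmx mul_block_col !mul1mx !mul0mx !addr0.
  split; first by rewrite /Qmx mul_block_col !mul0mx !addr0 mul1mx addr0 col_mx0.
  apply: vnorm_unit; rewrite /dot big_split_ord /= [X in _ + X]big1 ?addr0; last first.
    by move=> j _; rewrite col_mxEd mxE mulr0.
  rewrite (bigD1 i0) //= big1 ?addr0.
    by rewrite col_mxEu mxE !eqxx /= oppr0 mulr1.
  by move=> j ji; rewrite col_mxEu mxE (negbTE ji) /= mulr0.
pose v := psi *t e.
have v1 : vnorm v = 1.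
  by apply: vnorm_unit; rewrite dot_tens !dot_self psi1 e1 expr1n mulr1.
pose a i := X i *m psi.
pose g i := Gam i *m e.
pose y := Y *m psi.
have Lv : localizer Gam A B lam nu *m v = \sum_i (a i *t g i) + y *t e.
  rewrite /localizer mulmxBl mulmxDl mulmx_suml !tensmx_mul Pe Qe tensmx0 subr0.
  by congr (_ + _); apply: eq_bigr => i _; rewrite tensmx_mul.
have gg : forall i, dot (g i) (g i) = 1.
  by move=> i; rewrite /g herm_dot // mulmxA G2 mul1mx dot_self e1 expr1n.
have g1 : forall i, vnorm (g i) = 1 by move=> i; apply: vnorm_unit.
have ganti : forall i k, i != k -> dot (g k) (g i) = - dot (g i) (g k).
  move=> i k ik; rewrite /g !herm_dot // !mulmxA (GA k i); last by rewrite eq_sym.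
  by rewrite mulNmx dotNr.
have E1 : dot (localizer Gam A B lam nu *m v) (localizer Gam A B lam nu *m v) =
   (\sum_i \sum_k dot (a i) (a k) * dot (g i) (g k) + \sum_i dot (a i) y * dot (g i) e)
   + (\sum_k dot y (a k) * dot e (g k) + dot y y * dot e e).
  rewrite Lv dotDl !dotDr dotsuml dotsumr dotsuml dot_tens.
  congr (_ + _ + (_ + _)).
  - apply: eq_bigr => i _; rewrite dotsumr; apply: eq_bigr => k _; exact: dot_tens.
  - apply: eq_bigr => i _; exact: dot_tens.
  - apply: eq_bigr => k _; exact: dot_tens.
pose G i := (X i *m Y) *t (Gam i *m @Pmx R m).
pose H i := (X i *m adjmx Y) *t (Gam i *m @Qmx R m).
have Fdef : Fmx Gam A B lam nu = \sum_i (G i + adjmx (G i)) - \sum_i (H i + adjmx (H i)) by [].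
have Gv : forall i, G i *m v = (X i *m y) *t g i.
  by move=> i; rewrite /G tensmx_mul -!mulmxA Pe.
have Hv : forall i, H i *m v = 0.
  by move=> i; rewrite /H tensmx_mul -!mulmxA Qe mulmx0 tensmx0.
rewrite Fdef in Heps2.
clearbody G H.
have EF : dot v ((\sum_i (G i + adjmx (G i)) - \sum_i (H i + adjmx (H i))) *m v) =
    \sum_i (dot (a i) y * dot (g i) e + dot y (a i) * dot e (g i)).
  rewrite dot_mxB dot_mxsum dot_mxsum.
  rewrite [X in _ - X]big1 ?subr0; last first.
    by move=> i _; rewrite dot_mxD [dot v (adjmx _ *m v)]dot_adj adjmxK Hv dot0r dot0l addr0.
  apply: eq_bigr => i _.
  have q : dot v (G i *m v) = dot (a i) y * dot (g i) e.
    by rewrite Gv dot_tens -(herm_dot _ _ (XH i)) -(herm_dot _ _ (GH i)).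
  by rewrite dot_mxD [dot v (adjmx _ *m v)]dot_adj adjmxK q -[dot (G i *m v) v]dotJ q rmorphM /= !dotJ.
pose Sx := \sum_i \sum_(k | i != k) dot (a i) (a k) * dot (g i) (g k).
have D : \sum_i \sum_k dot (a i) (a k) * dot (g i) (g k)
    = \sum_i ((vnorm (a i) ^+ 2)%:C)%C + Sx.
  rewrite /Sx -big_split; apply: eq_bigr => i _; rewrite (bigD1 i) //= gg mulr1 dot_self.
  by congr (_ + _); apply: eq_bigl => k; rewrite eq_sym.
have ee : dot e e = 1 by rewrite dot_self e1 expr1n.
pose W := \sum_i vnorm (a i) ^+ 2 + vnorm y ^+ 2.
pose dF := dot v ((\sum_i (G i + adjmx (G i)) - \sum_i (H i + adjmx (H i))) *m v).
have key : ((vnorm (localizer Gam A B lam nu *m v) ^+ 2)%:C)%C = (W%:C)%C + (Sx + dF).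
  rewrite -dot_self E1 D /dF EF big_split /= ee dot_self /W rmorphD rmorph_sum /=.
  rewrite mulr1 -!addrA; congr (_ + _).
  rewrite [in RHS]addrC -!addrA; congr (_ + _).
pose T := \sum_(j < d) \sum_(k < d | j != k) opnorm (A j *m A k - A k *m A j).
have Sx' : Sx = \sum_i \sum_(k | i != k) (- dot (a k) (a i)) * dot (g i) (g k).
  rewrite /Sx; under eq_bigr do rewrite big_mkcond; rewrite exchange_big /=.
  apply: eq_bigr => i _; rewrite [RHS]big_mkcond; apply: eq_bigr => k _.
  rewrite eq_sym; case: ifP => // ik.
  by rewrite (ganti i k ik) mulrN mulNr.
have Sx2 : Sx *+ 2 = \sum_i \sum_(k | i != k)
    dot psi ((A i *m A k - A k *m A i) *m psi) * dot (g i) (g k).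
  rewrite mulr2n {1}Sx' /Sx -big_split; apply: eq_bigr => i _.
  rewrite -big_split; apply: eq_bigr => k ik /=; rewrite -mulrDl; congr (_ * _).
  rewrite -(comm_shift (A i) (A k) ((lam i)%:C)%C ((lam k)%:C)%C).
  rewrite [RHS]dot_mxB -!mulmxA -(herm_dot psi (X k *m psi) (XH i)) -(herm_dot psi (X i *m psi) (XH k)).
  by rewrite addrC.
have Sxb : normc Sx <= T.
  have h : normc (Sx *+ 2) <= T.
    rewrite Sx2; apply: le_trans (normc_sum _ _ _) _; apply: ler_sum => i _.
    apply: le_trans (normc_sum _ _ _) _; apply: ler_sum => k ik.
    rewrite ComplexField.Normc.normcM.
    have h1 := @cs_unit R _ psi ((A i *m A k - A k *m A i) *m psi) psi1.
    have h2 := @opnorm_ub R _ _ (A i *m A k - A k *m A i) psi psi1.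
    have h3 := @cs_unit R _ (g i) (g k) (g1 i); rewrite g1 in h3.
    have := normc_ge0 (dot psi ((A i *m A k - A k *m A i) *m psi)).
    have := normc_ge0 (dot (g i) (g k)); nra.
  have := @normcMn R Sx 2; have := normc_ge0 Sx; rewrite mulr2n => ? E.
  rewrite E in h; lra.
have dFb : normc dF <= opnorm (\sum_i (G i + adjmx (G i)) - \sum_i (H i + adjmx (H i))).
  exact: le_trans (@cs_unit R _ v _ v1) (@opnorm_ub R _ _ _ v v1).
have WE : W = \sum_(j < d) vnorm (A j *m psi - rscal n (lam j) *m psi) ^+ 2
    + vnorm (B *m psi - nu *: psi) ^+ 2.
  rewrite /W /y /Y mulmxBl mul_scalar_mx; congr (_ + _).
  by apply: eq_bigr => j _; rewrite /a /X mulmxBl.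
rewrite -WE in Hpsi; rewrite -/T in Heps2.
have sq : vnorm (localizer Gam A B lam nu *m v) ^+ 2 <= eps1 + eps2.
  have := f_equal (@complex.Re R) key; rewrite Re_addC /= => ->.
  have := Re_le_normc (Sx + dF); have := @le_normcD R Sx dF; lra.
apply/mem_set; rewrite /clifford_radial_gap /=.
apply: le_trans (@sigma_min_lb R _ _ v v1) _.
rewrite -[vnorm _]ger0_norm ?vnorm_ge0 // -sqrtr_sqr ler_sqrt //; lra.
Qed.
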